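(* Let $\Omega = \mathbb{R}^{2n}$, or $\Omega = \mathbb{Z}_d^{2n}$ with $d$ prime. Let $\{(V,\vec v_j)\}_j$ be a family of epistemic states, with $V = \langle \vec f_1,\dots,\vec f_k\rangle$, such that $\vec f_k$ is totally unknown in the family and $\vec f_1,\dots,\vec f_{k-1}$ are constant. Then there exists an observable $\vec f\in\Omega$ such that $V' := \langle \vec f_1,\dots,\vec f_{k-1}\rangle \oplus \langle\vec f\rangle$ is an isotropic subspace with $V'\neq V$. Furthermore, $(V',\vec v_j)$ is a valid epistemic state for every valuation vector $\vec v_j$ of the family.
   Context: Phase space $\Omega$ (over $\mathbb R$ or $\mathbb Z_d$) with coordinates $(q_1,p_1,\dots,q_n,p_n)$. Observables are vectors $\vec f\in\Omega$, evaluated on an ontic state $\vec m$ as $\vec f^T\vec m$. Symplectic form: $\langle\vec f,\vec g\rangle = \sum_{i=1}^n (f_{2i-1}g_{2i} - f_{2i}g_{2i-1})$ (mod $d$ in the discrete case); observables commute if this vanishes. A subspace $V$ is isotropic if $\langle \vec f,\vec g\rangle=0$ for all $\vec f,\vec g\in V$. A (valid) epistemic state is a pair $(V,\vec v)$ with $V\subseteq\Omega$ isotropic and $\vec v\in\Omega$. For a family $\{(V,\vec v_j)\}_j$, an observable $\vec f_i\in V$ is constant if $\vec f_i^T\vec v_j$ is the same for all $j$, and totally unknown if for every possible value $c$ of $\vec f_i$ (every value attained by $\vec f_i^T\vec m$, $\vec m\in\Omega$) some member satisfies $\vec f_i^T\vec v_j = c$. *)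

(* Defs.v *)
From HB Require Import structures.
From mathcomp Require Import all_boot all_order all_algebra.
From mathcomp Require Import reals.
Set Implicit Arguments. Unset Strict Implicit. Unset Printing Implicit Defensive.
Import Order.TTheory GRing.Theory Num.Theory.
Local Open Scope ring_scope.

(* Phase space Omega = F^(2n), vectors are row vectors 'rV[F]_(n.*2),
   with 0-based coordinates (q_1,p_1,...,q_n,p_n) = (x 0, x 1, ..., x (2n-2), x (2n-1)). *)
Definition Omega (F : fieldType) (n : nat) := 'rV[F]_(n.*2).

Definition obs_val (F : fieldType) (m : nat) (f x : 'rV[F]_m) : F :=
  \sum_(i < m) f 0 i * x 0 i.

(* Symplectic form <f,g> = sum_{i=1}^n (f_{2i-1} g_{2i} - f_{2i} g_{2i-1})
   (1-based); in 0-based indices: sum over even i with j = i+1 of f_i g_j - f_j g_i. *)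
Definition sympl (F : fieldType) (m : nat) (f g : 'rV[F]_m) : F :=
  \sum_(i < m | ~~ odd i) \sum_(j < m | val j == (val i).+1)
     (f 0 i * g 0 j - f 0 j * g 0 i).

Definition isotropic (F : fieldType) (m r : nat) (S : 'M[F]_(r, m)) : Prop :=
  forall x y : 'rV[F]_m, (x <= S)%MS -> (y <= S)%MS -> sympl x y = 0.

(* (V, v) is a valid epistemic state: V isotropic, v any vector of Omega. *)
Definition valid_epistemic (F : fieldType) (m r : nat) (S : 'M[F]_(r, m))
  (v : 'rV[F]_m) : Prop := isotropic S.

Definition constant_in (F : fieldType) (m : nat) (J : Type) (v : J -> 'rV[F]_m)
  (f : 'rV[F]_m) : Prop :=
  forall j j' : J, obs_val f (v j) = obs_val f (v j').

Definition totally_unknown (F : fieldType) (m : nat) (J : Type) (v : J -> 'rV[F]_m)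
  (f : 'rV[F]_m) : Prop :=
  forall c : F, (exists x : 'rV[F]_m, obs_val f x = c) -> exists j : J, obs_val f (v j) = c.

(* The claim of the theorem over the field F, for Omega = F^(2n).
   The generators f_1..f_k of V are f 0, ..., f (k-1), f k (0-based; f ord_max = f_k),
   assumed to form a basis of V. *)
Definition claim (F : fieldType) (n : nat) : Prop :=
  forall (k : nat) (J : Type) (f : 'I_k.+1 -> 'rV[F]_(n.*2)) (v : J -> 'rV[F]_(n.*2)),
    let V := \matrix_(i < k.+1) f i in
    let W := \matrix_(i < k) f (widen_ord (leqnSn k) i) in
    row_free V ->
    (forall j, valid_epistemic V (v j)) ->
    totally_unknown v (f ord_max) ->
    (forall i : 'I_k.+1, i != ord_max -> constant_in v (f i)) ->
    exists g : 'rV[F]_(n.*2),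
      let V' := (W + g)%MS in
      [/\ ~~ (g <= W)%MS, mxdirect (W + g), isotropic V', ~~ (V' == V)%MS
        & forall j, valid_epistemic V' (v j)].

(* Main.v *)
Require Import Defs.
From HB Require Import structures.
From mathcomp Require Import all_boot all_order all_algebra.
From mathcomp Require Import reals.
From mathcomp Require Import zify ring.
Set Implicit Arguments. Unset Strict Implicit. Unset Printing Implicit Defensive.
Import Order.TTheory GRing.Theory Num.Theory.
Local Open Scope ring_scope.

Section S.
Variable F : fieldType.
Variable n : nat.
Local Notation m := (n.*2).

Definition cJ (i j : 'I_m) : F := ((~~ odd i) && (val j == (val i).+1))%:R.
Definition Jm : 'M[F]_m := \matrix_(i, j) (cJ i j - cJ j i).

Lemma symplE (x y : 'rV[F]_m) : sympl x y = (x *m Jm *m y^T) 0 0.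
Proof.
have -> : (x *m Jm *m y^T) 0 0 = \sum_i \sum_j x 0 i * (cJ i j - cJ j i) * y 0 j.
  rewrite mxE exchange_big /=; apply: eq_bigr => j _.
  rewrite !mxE big_distrl /=; apply: eq_bigr => i _; by rewrite !mxE.
transitivity (\sum_i \sum_j cJ i j * (x 0 i * y 0 j - x 0 j * y 0 i)).
  rewrite /sympl big_mkcond; apply: eq_bigr => i _ /=.
  case: ifP => hi.
    rewrite big_mkcond; apply: eq_bigr => j _ /=; rewrite /cJ hi /=.
    by case: eqP => _; rewrite ?mul1r ?mul0r.
  by rewrite big1 // => j _; rewrite /cJ hi /= mul0r.
transitivity (\sum_i \sum_j (cJ i j * (x 0 i * y 0 j)) - \sum_i \sum_j (cJ i j * (x 0 j * y 0 i))).
  rewrite -sumrB; apply: eq_bigr => i _; rewrite -sumrB; apply: eq_bigr => j _; by rewrite mulrBr.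
rewrite [X in _ - X]exchange_big /= -sumrB.
apply: eq_bigr => i _; rewrite -sumrB; apply: eq_bigr => j _.
ring.
Qed.

Definition pv (i : nat) := if odd i then i.-1 else i.+1.
Lemma pv_lt (i : 'I_m) : (pv i < m)%N.
Proof.
rewrite /pv; case: ifP => hi.
  exact: leq_ltn_trans (leq_pred i) (ltn_ord i).
rewrite ltn_neqAle ltn_ord andbT; apply/eqP => h.
by have := congr1 odd h; rewrite odd_double /= hi.
Qed.
Definition p (i : 'I_m) : 'I_m := Ordinal (pv_lt i).

Lemma pK : involutive p.
Proof.
move=> i; apply: val_inj => /=; rewrite /pv.
case: i => [[|i] hi] //=.
by case: (boolP (odd i)) => h /=; rewrite ?h ?(negbTE h).
Qed.

Definition sg (i : 'I_m) : F := if odd i then -1 else 1.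

Lemma JmE i j : Jm i j = sg i * (j == p i)%:R.
Proof.
rewrite mxE /cJ /sg -val_eqE /= /pv.
case: i => [[|i] hi] //=.
  by rewrite andbF subr0 mul1r.
case: ifP => h /=.
  rewrite eqSS; case: (eqVneq (val j) i) => [->|hj] /=; first by rewrite h sub0r mulN1r.
  by rewrite andbF subrr mulr0.
rewrite eqSS; case: (eqVneq (val j) i) => [->|_]; by rewrite ?h ?andbF subr0 mul1r.
Qed.

Lemma JmJmT : Jm *m Jm^T = 1%:M.
Proof.
apply/matrixP => i k; rewrite !mxE (bigD1 (p i)) //= big1 ?addr0.
  rewrite [Jm^T _ _]mxE !JmE eqxx mulr1 (inj_eq (can_inj pK)) eq_sym.
  case: (eqVneq i k) => [->|]; last by rewrite !mulr0.
  by rewrite /sg mulr1; case: ifP; rewrite ?mulr1 ?mulrNN ?mulr1.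
by move=> j /negbTE hj; rewrite JmE hj mulr0 mul0r.
Qed.

Lemma Jm_free : row_free Jm.
Proof. by rewrite row_free_unit; case: (mulmx1_unit JmJmT). Qed.

Lemma JmT : Jm^T = - Jm.
Proof. by apply/matrixP => i j; rewrite !mxE opprB. Qed.


Lemma entryE r1 r2 (A : 'M[F]_(r1, m)) (C : 'M[F]_(r2, m)) a b :
  (A *m Jm *m C^T) a b = sympl (row a A) (row b C).
Proof.
rewrite symplE !mxE; apply: eq_bigr => j _; rewrite !mxE; congr (_ * _).
by apply: eq_bigr => l _; rewrite !mxE.
Qed.

Lemma sympl_alt (x : 'rV[F]_m) : sympl x x = 0.
Proof.
by rewrite /sympl big1 // => i _; rewrite big1 // => j _; rewrite mulrC subrr.
Qed.

Lemma isoP r (S : 'M[F]_(r, m)) : isotropic S <-> S *m Jm *m S^T = 0.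
Proof.
split.
  move=> iso; apply/matrixP => a b; rewrite entryE mxE; apply: iso; exact: row_sub.
move=> h x y /submxP [u ->] /submxP [w ->].
rewrite symplE trmx_mul !mulmxA.
have -> : u *m S *m Jm *m S^T = u *m (S *m Jm *m S^T) by rewrite !mulmxA.
by rewrite h mulmx0 mul0mx mxE.
Qed.

End S.

Lemma claim_gen (F : fieldType) n : claim F n.
Proof.
move=> k J f v V W Vfree Vval Tu Cst.
have [j0 _] : exists j, obs_val (f ord_max) (v j) = obs_val (f ord_max) 0.
  by apply: Tu; exists 0.
have isoV : isotropic V := Vval j0.
have rV : \rank V = k.+1 by apply/eqP.
have WV : (W <= V)%MS.
  by apply/row_subP => a; rewrite !rowK; apply/submxP; exists (delta_mx 0 (widen_ord (leqnSn k) a)); rewrite -rowE rowK.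
have rW : (\rank W <= k)%N by exact: rank_leq_row.
have bound : (k.+1 + k.+1 <= n.*2)%N.
  have hV : (V <= kermx (Jm F n *m V^T))%MS.
    by apply/sub_kermxP; rewrite mulmxA; apply/isoP.
  have := mxrankS hV; rewrite mxrank_ker.
  have -> : \rank (Jm F n *m V^T) = \rank V.
    by rewrite -mxrank_tr trmx_mul trmxK mxrankMfree ?rV // row_free_unit unitmx_tr -row_free_unit Jm_free.
  rewrite rV; lia.
set K := kermx (Jm F n *m W^T).
have rK : (k.+1 < \rank K)%N.
  rewrite /K mxrank_ker.
  have := mxrankM_maxr (Jm F n) W^T; rewrite mxrank_tr; lia.
have /existsP [i hi] : [exists i, ~~ (row i K <= V)%MS].
  rewrite -negb_forall; apply/negP => /forallP h.
  have KV : (K <= V)%MS by apply/row_subP => i; exact: h i.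
  by have := mxrankS KV; rewrite rV; lia.
set g := row i K.
have gW : g *m (Jm F n *m W^T) = 0 by apply/sub_kermxP; exact: row_sub.
have gnW : ~~ (g <= W)%MS by apply: contra hi => h; exact: submx_trans h WV.
have isoW : isotropic W by move=> x y hx hy; apply: isoV; apply: submx_trans WV.
have isoWg : isotropic (W + g)%MS.
  have h : isotropic (col_mx W g).
    apply/isoP; rewrite tr_col_mx mul_col_mx mul_col_row.
    have -> : W *m Jm F n *m W^T = 0 by apply/isoP.
    have -> : W *m Jm F n *m g^T = 0.
      apply: trmx_inj; rewrite trmx0 !trmx_mul trmxK JmT mulNmx mulmxN gW oppr0 //.
    have -> : g *m Jm F n *m W^T = 0 by rewrite -mulmxA gW.
    have -> : g *m Jm F n *m g^T = 0.
      by apply/matrixP => a b; rewrite !ord1 -symplE sympl_alt mxE.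
    exact: block_mx0.
  move=> x y hx hy; apply: h; [move: hx | move: hy]; by rewrite addsmxE.
exists g; split => //.
- apply/mxdirect_addsP; apply/eqP; rewrite -mxrank_eq0.
  have h1 : (\rank (W :&: g)%MS <= 1)%N by apply: leq_trans (mxrankS (capmxSr W g)) (rank_leq_row g).
  case: (ltngtP (\rank (W :&: g)%MS) 1) h1 => // [h2 _|h2 _]; first by lia.
  have := mxrank_leqif_sup (capmxSr W g); rewrite h2 => hh.
  have hg : (g <= W :&: g)%MS by rewrite -(geq_leqif hh) rank_leq_row.
  by move: hg; rewrite sub_capmx (negbTE gnW).
- apply/negP => /andP [h _]; apply: (negP hi); exact: submx_trans (addsmxSr W g) h.
Qed.

Theorem mainTheorem5 :
  (forall (R : realType) (n : nat), claim R n) /\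
  (forall (d : nat), prime d -> forall n : nat, claim 'F_d n).
Proof.
split; first by move=> R n; exact: claim_gen.
by move=> d _ n; exact: claim_gen.
Qed.
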